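(* Let $S$ be a collection of non-vertical segments in $\mathbb{R}^3$ in general position, let $G_S$ be the mixed graph associated to $S$ (defined in the context), and let $k\ge 0$ be an integer. Then all depth cycles of $S$ can be eliminated with at most $k$ cuts if and only if $G_S$ admits a feedback vertex set of size at most $k$.
   Context: Segments are closed line segments in $\mathbb{R}^3$, non-vertical meaning not parallel to the $z$-axis. For a segment $s$ let $\bar s$ be its orthogonal projection to the $xy$-plane. General position: segments are pairwise disjoint in $\mathbb{R}^3$; any two projections meet in at most one point; no point of the plane lies on three or more projections. Relation: $s \succ s'$ if some vertical line $\ell$ meets both $s$ and $s'$ and the $z$-coordinate of $\ell\cap s$ exceeds that of $\ell\cap s'$. A depth cycle is a sequence $s_1\succ s_2\succ\dots\succ s_p=s_1$ ($p\ge2$). Cutting a segment $s$ at points $q_1,\dots,q_m\in s$ replaces $s$ by the connected components of $s\setminus\{q_1,\dots,q_m\}$, and $\succ$ is evaluated on the resulting pieces; each cut point counts as one cut. Depth cycles are eliminated if the resulting pieces have no depth cycle. Mixed graphs: a mixed graph $(V,E,A)$ has vertex set $V$, a set $E$ of undirected edges $\{u,v\}$ and a set $A$ of directed arcs $(u,v)$ (tail $u$, head $v$). A cycle is a sequence $v_1,\dots,v_\ell$ with $v_\ell=v_1$, $\ell\ge3$, $v_1,\dots,v_{\ell-1}$ pairwise distinct, such that for each $1\le i\le \ell-1$ either $\{v_i,v_{i+1}\}\in E$ or $(v_i,v_{i+1})\in A$, and no undirected edge is used twice. A feedback vertex set is a set $U\subseteq V$ such that the graph obtained by deleting $U$ has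 no cycle. The graph $G_S=(V,E,A)$: for $s\in S$ let $I(s)$ be the set of points where $\bar s$ meets $\bar t$ for some $t\in S\setminus\{s\}$, listed in order along $\bar s$ as $p^s_1,\dots,p^s_{|I(s)|}$. For each $s$ create vertices $v^s_1,\dots,v^s_{|I(s)|}$ ($v^s_i$ represents $p^s_i$, i.e. the point of $s$ above $p^s_i$), and let $V$ be the union over all $s\in S$. For each $s$ add undirected edges $\{v^s_i,v^s_{i+1}\}$ for $1\le i\le |I(s)|-1$. For each pair $s\succ t$ with $\bar s\cap\bar t\neq\emptyset$, if $p^s_i=p^t_j$ is the common point, add the arc $(v^s_i,v^t_j)$. A vertex set $U$ corresponds to the set of cuts that cuts each segment $s$ at the points of $s$ lying above $p^s_i$ for $v^s_i\in U$. *)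

(* Defs.v *)
From HB Require Import structures.
From mathcomp Require Import all_boot all_order all_algebra reals.
From Stdlib Require List.
Set Implicit Arguments.
Unset Strict Implicit.
Unset Printing Implicit Defensive.
Import Order.TTheory GRing.Theory Num.Theory.
Local Open Scope ring_scope.

Section Geometry.
Variable R : realType.

Record pt := Pt { px : R; py : R; pz : R }.

Definition proj (p : pt) : R * R := (px p, py p).

Definition lerp (p q : pt) (t : R) : pt :=
  Pt (px p + t * (px q - px p)) (py p + t * (py q - py p)) (pz p + t * (pz q - pz p)).

Definition lerp2 (p q : R * R) (t : R) : R * R :=
  (p.1 + t * (q.1 - p.1), p.2 + t * (q.2 - p.2)).

Record seg := Seg { sa : pt; sb : pt }.

Definition closed_between (x y z : pt) : Prop :=
  exists t : R, 0 <= t <= 1 /\ z = lerp x y t.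

Definition on_seg (s : seg) (p : pt) : Prop := closed_between (sa s) (sb s) p.

Definition on_pseg (s : seg) (q : R * R) : Prop :=
  exists t : R, 0 <= t <= 1 /\ q = lerp2 (proj (sa s)) (proj (sb s)) t.

Definition nonvertical (s : seg) : Prop := proj (sa s) <> proj (sb s).

Variable I : finType.

Definition general_position (s : I -> seg) : Prop :=
  (forall i j : I, i <> j -> forall p, on_seg (s i) p -> on_seg (s j) p -> False) /\
  (forall i j : I, i <> j -> forall q q',
      on_pseg (s i) q -> on_pseg (s j) q -> on_pseg (s i) q' -> on_pseg (s j) q' -> q = q') /\
  (forall (q : R * R) (i j l : I), i <> j -> j <> l -> i <> l ->
      on_pseg (s i) q -> on_pseg (s j) q -> on_pseg (s l) q -> False).

Definition above (A B : pt -> Prop) : Prop :=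
  exists p p' : pt, A p /\ B p' /\ proj p = proj p' /\ pz p' < pz p.

(* a depth cycle in a family F of (pieces of) segments:
   P_0 > P_1 > ... > P_n = P_0 with n >= 1 (i.e. p = n+1 >= 2) *)
Definition has_depth_cycle (F : (pt -> Prop) -> Prop) : Prop :=
  exists (n : nat) (P : nat -> (pt -> Prop)),
    (1 <= n)%N /\ (forall j, (j <= n)%N -> F (P j)) /\
    (forall j, (j < n)%N -> above (P j) (P j.+1)) /\ P n = P 0%N.

(* Cutting at the set of points Q: the piece (connected component of
   s_i \ Q) containing x, i.e. all y on s_i such that the closed
   subsegment [x,y] of s_i avoids Q. *)
Definition piece (s : I -> seg) (Q : pt -> Prop) (i : I) (x : pt) : pt -> Prop :=
  fun y => on_seg (s i) y /\ (forall z, closed_between x y z -> ~ Q z).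

Definition pieces (s : I -> seg) (Q : pt -> Prop) : (pt -> Prop) -> Prop :=
  fun P => exists (i : I) (x : pt), on_seg (s i) x /\ ~ Q x /\ P = piece s Q i x.

Definition eliminable_with (s : I -> seg) (k : nat) : Prop :=
  exists Q : seq pt, (size Q <= k)%N /\
    (forall q, List.In q Q -> exists i, on_seg (s i) q) /\
    ~ has_depth_cycle (pieces s (fun p => List.In p Q)).

(* Vertex v^{s_i}_m is represented by the pair (i, p) where p = p^{s_i}_m
   is the corresponding point of I(s_i). *)
Definition vtx := (I * (R * R))%type.

Definition is_vertex (s : I -> seg) (v : vtx) : Prop :=
  exists j : I, j <> v.1 /\ on_pseg (s v.1) v.2 /\ on_pseg (s j) v.2.

(* undirected edges: consecutive points of I(s_i) along \bar s_i *)
Definition gedge (s : I -> seg) (v w : vtx) : Prop :=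
  v.1 = w.1 /\ is_vertex s v /\ is_vertex s w /\ v.2 <> w.2 /\
  (forall q, is_vertex s (v.1, q) ->
     ~ (exists t : R, 0 < t < 1 /\ q = lerp2 v.2 w.2 t)).

Definition garc (s : I -> seg) (v w : vtx) : Prop :=
  v.1 <> w.1 /\ v.2 = w.2 /\ is_vertex s v /\ is_vertex s w /\
  above (on_seg (s v.1)) (on_seg (s w.1)).

Definition same_upair (a b c d : vtx) : Prop :=
  (a = c /\ b = d) \/ (a = d /\ b = c).

(* a cycle v_0, ..., v_m = v_0 (length l = m+1 >= 3) of G_S all of whose
   vertices lie in the set W (W = V \ U for the graph with U deleted);
   c j says whether step j uses an undirected edge (true) or an arc (false) *)
Definition has_cycle_in (s : I -> seg) (W : vtx -> Prop) : Prop :=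
  exists (m : nat) (v : nat -> vtx) (c : nat -> bool),
    (2 <= m)%N /\ v m = v 0%N /\
    (forall j, (j < m)%N -> is_vertex s (v j) /\ W (v j)) /\
    (forall j j', (j < m)%N -> (j' < m)%N -> v j = v j' -> j = j') /\
    (forall j, (j < m)%N ->
       if c j then gedge s (v j) (v j.+1) else garc s (v j) (v j.+1)) /\
    (forall j j', (j < j')%N -> (j' < m)%N -> c j -> c j' ->
       ~ same_upair (v j) (v j.+1) (v j') (v j'.+1)).

Definition has_fvs_of_size (s : I -> seg) (k : nat) : Prop :=
  exists U : seq vtx, (size U <= k)%N /\
    (forall v, List.In v U -> is_vertex s v) /\
    ~ has_cycle_in s (fun v => ~ List.In v U).

End Geometry.

(* Main.v *)
Require Import Defs.
From mathcomp Require Import all_boot all_order all_algebra reals.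
From mathcomp Require Import boolp zify.
From mathcomp Require Import ring lra.
From Stdlib Require List.
Set Implicit Arguments.
Unset Strict Implicit.
Unset Printing Implicit Defensive.
Import Order.TTheory GRing.Theory Num.Theory.
Local Open Scope ring_scope.


Section S.
Variable R : realType.
Variable I : finType.
Variable s : I -> seg R.
Hypothesis nv : forall i, nonvertical (s i).
Hypothesis gp : general_position s.

Definition P (i : I) (t : R) : pt R := lerp (sa (s i)) (sb (s i)) t.

Definition betw (a b t : R) : Prop := (a <= t /\ t <= b) \/ (b <= t /\ t <= a).
Definition sbetw (a b t : R) : Prop := (a < t /\ t < b) \/ (b < t /\ t < a).

Lemma pinj i t t' : proj (P i t) = proj (P i t') -> t = t'.
Proof.
move: (@nv i); rewrite /nonvertical /P /proj /lerp /=.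
case: (sa (s i)) => a1 a2 a3; case: (sb (s i)) => b1 b2 b3 /= hne [e1 e2].
case: (eqVneq t t') => // hneq; exfalso; apply: hne.
have h1 : (t - t') * (b1 - a1) = 0 by rewrite mulrBl; lra.
have h2 : (t - t') * (b2 - a2) = 0 by rewrite mulrBl; lra.
move/eqP: h1; move/eqP: h2; rewrite !mulf_eq0 !subr_eq0 (negbTE hneq) /= => /eqP h2 /eqP h1.
by rewrite h1 h2.
Qed.

Lemma lerpP i a b u : lerp (P i a) (P i b) u = P i (a + u * (b - a)).
Proof. rewrite /P /lerp /=; congr Pt; ring. Qed.

Lemma lerp2P i a b u :
  lerp2 (proj (P i a)) (proj (P i b)) u = proj (P i (a + u * (b - a))).
Proof. rewrite /P /lerp2 /lerp /proj /=; congr pair; ring. Qed.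

Lemma cbP i a b z : closed_between (P i a) (P i b) z <-> exists t, betw a b t /\ z = P i t.
Proof.
split.
- move=> [u [/andP [u0 u1] ->]]; exists (a + u * (b - a)); split; last exact: lerpP.
  rewrite /betw; case: (lerP a b) => hab.
  + left; nra.
  + right; nra.
- move=> [t [hb ->]].
  case: (eqVneq a b) => [eab|hab]; first subst b.
  + exists 0; split; first by rewrite lexx ler01.
    rewrite lerpP mul0r addr0; congr P; case: hb => -[h1 h2]; lra.
  + exists ((t - a) / (b - a)); split; last first.
      rewrite lerpP; congr P; rewrite mulfVK ?subr_eq0 1?eq_sym //; ring.
    have hba : b - a != 0 by rewrite subr_eq0 eq_sym.
    case: hb => [[h1 h2]|[h1 h2]].
    * have hlt : 0 < b - a by rewrite lt_neqAle eq_sym hba /=; lra.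
      rewrite divr_ge0 ?subr_ge0 //=; last lra.
      by rewrite ler_pdivrMr // mul1r lerD2r.
    * have hlt : b - a < 0 by rewrite lt_neqAle hba /=; lra.
      rewrite -[(t - a) / (b - a)]mulrNN -invrN.
      have hlt' : 0 < - (b - a) by rewrite oppr_gt0.
      rewrite divr_ge0 /=; [|lra|lra].
      by rewrite ler_pdivrMr // mul1r; lra.
Qed.


Lemma onP i p : on_seg (s i) p -> exists t, 0 <= t <= 1 /\ p = P i t.
Proof. by []. Qed.

Lemma onPt i t : 0 <= t <= 1 -> on_seg (s i) (P i t).
Proof. by move=> h; exists t. Qed.

Lemma onP01 i t : on_seg (s i) (P i t) -> 0 <= t <= 1.
Proof. move=> [u [hu e]]; have := pinj (f_equal (@proj R) e) => ->; done. Qed.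

Lemma psegP i q : on_pseg (s i) q -> exists t, 0 <= t <= 1 /\ q = proj (P i t).
Proof. by []. Qed.

Lemma psegPt i t : 0 <= t <= 1 -> on_pseg (s i) (proj (P i t)).
Proof. by move=> h; exists t. Qed.

Lemma psegP01 i t : on_pseg (s i) (proj (P i t)) -> 0 <= t <= 1.
Proof. move=> [u [hu e]]; have := pinj e => ->; done. Qed.

Lemma seg_pseg i p : on_seg (s i) p -> on_pseg (s i) (proj p).
Proof. by move=> [t [ht ->]]; exists t. Qed.

Lemma seg_eq i p p' : on_seg (s i) p -> on_seg (s i) p' -> proj p = proj p' -> p = p'.
Proof. by move=> [t [_ ->]] [t' [_ ->]] /pinj ->. Qed.

Lemma seg_uniq i j p : on_seg (s i) p -> on_seg (s j) p -> i = j.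
Proof.
move=> h1 h2; case: (eqVneq i j) => // hij; exfalso.
case: gp => hd _; apply: (hd i j _ p h1 h2); exact/eqP.
Qed.

Lemma cross_uniq i j q q' : i <> j -> on_pseg (s i) q -> on_pseg (s j) q ->
  on_pseg (s i) q' -> on_pseg (s j) q' -> q = q'.
Proof. move=> hij h1 h2 h3 h4; case: gp => _ [h _]; exact: (h i j hij q q' h1 h2 h3 h4). Qed.

Lemma above_asym i j : i <> j -> above (on_seg (s i)) (on_seg (s j)) ->
  above (on_seg (s j)) (on_seg (s i)) -> False.
Proof.
move=> hij [p [p' [hp [hp' [e lt1]]]]] [r [r' [hr [hr' [e' lt2]]]]].
have eq : proj p = proj r.
  apply: (cross_uniq hij); first exact: seg_pseg hp.
  - by rewrite e; exact: seg_pseg hp'.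
  - by rewrite e'; exact: seg_pseg hr'.
  - exact: seg_pseg hr.
have e1 : p = r' by apply: (seg_eq hp hr'); rewrite eq e'.
have e2 : p' = r by apply: (seg_eq hp' hr); rewrite -eq e.
move: lt1 lt2; rewrite e1 e2 => lt1 lt2; by have := lt_trans lt1 lt2; rewrite ltxx.
Qed.

Lemma ratio a b c : sbetw a b c -> exists u, 0 < u < 1 /\ c = a + u * (b - a).
Proof.
move=> hb.
have hba : b - a != 0 by rewrite subr_eq0; apply/eqP; case: hb; lra.
exists ((c - a) / (b - a)); split; last by rewrite mulfVK //; ring.
case: hb => [[h1 h2]|[h1 h2]].
- have hlt : 0 < b - a by lra.
  rewrite divr_gt0 /=; [|lra|lra].
  by rewrite ltr_pdivrMr // mul1r ltrD2r.
- have hlt' : 0 < - (b - a) by lra.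
  rewrite -[(c - a) / (b - a)]mulrNN -invrN.
  rewrite divr_gt0 /=; [|lra|lra].
  by rewrite ltr_pdivrMr // mul1r; lra.
Qed.

Lemma ratio_inv a b u : a != b -> 0 < u < 1 -> sbetw a b (a + u * (b - a)).
Proof.
move=> hab /andP [u0 u1]; rewrite /sbetw.
case: (ltgtP a b) hab => // hab _; [left|right]; nra.
Qed.

Lemma gedge_noin i a b c : gedge s (i, proj (P i a)) (i, proj (P i b)) ->
  is_vertex s (i, proj (P i c)) -> sbetw a b c -> False.
Proof.
move=> [_ [_ [_ [_ h]]]] hv hb.
apply: (h _ hv); have [u [hu ->]] := ratio hb.
by exists u; split => //; rewrite /= lerp2P.
Qed.

Lemma gedge_mk i a b : a != b -> is_vertex s (i, proj (P i a)) -> is_vertex s (i, proj (P i b)) ->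
  (forall c, sbetw a b c -> ~ is_vertex s (i, proj (P i c))) ->
  gedge s (i, proj (P i a)) (i, proj (P i b)).
Proof.
move=> hab ha hb h; split => //; split => //; split => //; split.
  by move=> /= /pinj e; move: hab; rewrite e eqxx.
move=> q hq [u [hu e]]; move: e; rewrite /= lerp2P => e.
by apply: (h _ (ratio_inv hab hu)); rewrite -e.
Qed.

Section Pieces.
Variable Q : pt R -> Prop.

Lemma piece_on i x y : piece s Q i x y -> on_seg (s i) y.
Proof. by case. Qed.

Lemma piece_notQ i x y : piece s Q i x y -> ~ Q y.
Proof. by move=> [_ h]; apply: h; exists 1; split; [rewrite ler01 lexx|rewrite /lerp; case: x; case: y => ? ? ? ? ? ? /=; congr Pt; ring]. Qed.

Lemma piece_self i x : on_seg (s i) x -> ~ Q x -> piece s Q i x x.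
Proof.
move=> hx hq; split => // z [u [_ ->]].
have -> : lerp x x u = x by rewrite /lerp; case: x {hx hq} => ? ? ? /=; congr Pt; ring.
done.
Qed.

Lemma piece_par i tx a : piece s Q i (P i tx) (P i a) <->
  (0 <= a <= 1 /\ forall t, betw tx a t -> ~ Q (P i t)).
Proof.
split.
- move=> [ho h]; split; first exact: (onP01 ho).
  by move=> t ht; apply: h; apply/cbP; exists t.
- move=> [ha h]; split; first exact: onPt.
  by move=> z /cbP [t [ht ->]]; apply: h.
Qed.

Lemma piece_mid i tx a b c : 0 <= tx <= 1 -> piece s Q i (P i tx) (P i a) ->
  piece s Q i (P i tx) (P i b) -> betw a b c -> piece s Q i (P i tx) (P i c).
Proof.
move=> hx /piece_par [ha h1] /piece_par [hb h2] hc; apply/piece_par; split.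
  move: ha hb => /andP [? ?] /andP [? ?]; apply/andP; case: hc; lra.
move=> t ht.
have : betw tx a t \/ betw tx b t by rewrite /betw in ht hc *; lra.
by case=> [/h1|/h2].
Qed.

Lemma piece_eq i x y : on_seg (s i) x -> piece s Q i x y -> piece s Q i x = piece s Q i y.
Proof.
move=> hx hy; have [tx [htx ex]] := onP hx; have [ty [hty ey]] := onP (piece_on hy).
subst x y; apply: funext => z; apply: propext; split.
- move=> hz; have [tz [htz ez]] := onP (piece_on hz); subst z.
  move: hy hz => /piece_par [_ h1] /piece_par [_ h2]; apply/piece_par; split => // t ht.
  have : betw tx ty t \/ betw tx tz t by rewrite /betw in ht *; lra.
  by case=> [/h1|/h2].
- move=> hz; have [tz [htz ez]] := onP (piece_on hz); subst z.
  move: hy hz => /piece_par [_ h1] /piece_par [_ h2]; apply/piece_par; split => // t ht.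
  have : betw tx ty t \/ betw ty tz t by rewrite /betw in ht *; lra.
  by case=> [/h1|/h2].
Qed.

End Pieces.

End S.



Section Chain.
Variable R : realType.

Lemma chain (F : (pt R -> Prop) -> Prop) m (f : nat -> pt R -> Prop) :
  f m = f 0%N -> (forall j, (j <= m)%N -> F (f j)) ->
  (forall j, (j < m)%N -> f j = f j.+1 \/ above (f j) (f j.+1)) ->
  (exists j, (j < m)%N /\ above (f j) (f j.+1)) -> has_depth_cycle F.
Proof.
elim: m f => [|m IH] f hm hF hs [j0 [hj0 ha0]]; first by [].
case: (pselect (exists j, (j < m.+1)%N /\ ~ above (f j) (f j.+1))) => [[j [hj hna]]|hall].
- have ej : f j = f j.+1 by case: (hs j hj).
  pose g i := if (i <= j)%N then f i else f i.+1.
  apply: (IH g).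
  + rewrite /g leq0n; case: ifP => h //.
    have e : j = m by lia.
    by rewrite e in ej *; rewrite ej hm.
  + by move=> i hi; rewrite /g; case: ifP => _; apply: hF; lia.
  + move=> i hi; rewrite /g /=; case: ifP => h1; case: ifP => h2.
    * by apply: hs; lia.
    * have e : i = j by lia.
      by subst i; rewrite ej; apply: hs; lia.
    * exfalso; lia.
    * by apply: hs; lia.
  + case: (ltngtP j0 j) => h.
    * exists j0; split; first lia.
      rewrite /g /=; case: ifP => h1; case: ifP => h2 //; exfalso; lia.
    * exists j0.-1; split; first lia.
      rewrite /g /=; have e1 : j0.-1.+1 = j0 by lia.
      case: ifP => h1; case: ifP => h2; rewrite ?e1.
      - exfalso; lia.
      - have e : j0.-1 = j by lia.
        by rewrite e ej -e e1.
      - exfalso; lia.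
      - by [].
    * by subst j0.
- exists m.+1, f; split => //; split => //; split => // j hj.
  case: (pselect (above (f j) (f j.+1))) => // hna.
  by exfalso; apply: hall; exists j.
Qed.

End Chain.



Section Walk.
Variables (R : realType) (I : finType) (s : I -> seg R).
Hypothesis nv : forall i, nonvertical (s i).
Hypothesis gp : general_position s.
Variable W : vtx R I -> Prop.

Definition step (v w : vtx R I) := gedge s v w \/ garc s v w.

Inductive reach : vtx R I -> vtx R I -> bool -> Prop :=
| R0 x : W x -> reach x x false
| RS x y z b : W x -> step x y -> reach y z b -> reach x z (b || `[< garc s x y >]).

Lemma reach_trans x y z b1 b2 : reach x y b1 -> reach y z b2 -> reach x z (b1 || b2).
Proof.
elim=> [x0 _ //| x0 y0 z0 b hw hst _ IH] h.
by have := RS hw hst (IH h); rewrite orbAC.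
Qed.

Lemma reach_fun x z b : reach x z b -> exists m (v : nat -> vtx R I),
  v 0%N = x /\ v m = z /\ W z /\
  (forall j, (j < m)%N -> step (v j) (v j.+1) /\ W (v j)) /\
  (b -> exists j, (j < m)%N /\ garc s (v j) (v j.+1)).
Proof.
elim=> [x0 hw | x0 y0 z0 b0 hw hst _ [m [v [h0 [hm [hz [hs ha]]]]]]].
- by exists 0%N, (fun _ => x0).
- exists m.+1, (fun j => if j is j'.+1 then v j' else x0); split => //; split => //; split => //; split.
  + by case=> [_|j hj] /=; [rewrite h0|exact: hs].
  + move=> /orP [/ha [j [hj hg]]|/asboolP hg]; first by exists j.+1.
    by exists 0%N; rewrite /= h0.
Qed.

Lemma step_v1 v w : step v w -> is_vertex s v.
Proof. by case=> [[_ [h _]]|[_ [_ [h _]]]]. Qed.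

Lemma cwalk_cycle N : forall m (v : nat -> vtx R I), (m < N)%N -> v m = v 0%N ->
  (forall j, (j < m)%N -> step (v j) (v j.+1) /\ W (v j)) ->
  (exists j, (j < m)%N /\ garc s (v j) (v j.+1)) -> has_cycle_in s W.
Proof.
elim: N => [//|N IH] m v hmN hm hs [j0 [hj0 ha0]].
case: (pselect (exists a b, [/\ (a < b)%N, (b < m)%N & v a = v b])) => [[a [b [hab hbm eab]]]|hd].
- case: (pselect ((a <= j0)%N /\ (j0 < b)%N)) => [[h1 h2]|hout].
  + apply: (IH (b - a)%N (fun j => v (a + j)%N)); first lia.
    * by rewrite addn0 (_ : (a + (b - a))%N = b) //; lia.
    * by move=> j hj; rewrite addnS; apply: hs; lia.
    * exists (j0 - a)%N; split; first lia.
      have e : (a + (j0 - a))%N = j0 by lia.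
      by rewrite /= addnS e.
  + pose g j := if (j <= a)%N then v j else v (j + (b - a))%N.
    apply: (IH (m - (b - a))%N g); first lia.
    * rewrite /g leq0n; case: ifP => h; first by exfalso; lia.
      by rewrite (_ : (m - (b - a) + (b - a))%N = m) //; lia.
    * move=> j hj; rewrite /g; case: ifP => h1; case: ifP => h2.
      - by apply: hs; lia.
      - have e : j = a by lia.
        subst j; rewrite eab (_ : (a.+1 + (b - a))%N = b.+1); last lia.
        by apply: hs; lia.
      - exfalso; lia.
      - by rewrite addSn; apply: hs; lia.
    * case: (ltnP j0 a) => h.
      - exists j0; split; first lia.
        by rewrite /g; case: ifP => h1; case: ifP => h2 //; exfalso; lia.
      - exists (j0 - (b - a))%N; split; first lia.
        rewrite /g; case: ifP => h1; case: ifP => h2.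
        ++ exfalso; lia.
        ++ have e1 : (j0 - (b - a))%N = a by lia.
           have e2 : j0 = b by lia.
           by rewrite e1 eab (_ : (a.+1 + (b - a))%N = b.+1) -?e2 //; lia.
        ++ exfalso; lia.
        ++ by rewrite addSn (_ : (j0 - (b - a) + (b - a))%N = j0) //; lia.
- have hdist : forall j j', (j < m)%N -> (j' < m)%N -> v j = v j' -> j = j'.
    move=> j j' hj hj' e; case: (ltngtP j j') => // h; exfalso; apply: hd.
    + by exists j, j'.
    + by exists j', j.
  have hm2 : (2 <= m)%N.
    case: (ltnP 1 m) => // h; exfalso.
    have em : m = 1%N by lia.
    have ej : j0 = 0%N by lia.
    subst m j0; move: ha0; rewrite hm => -[].
    by move=> /(_ erefl).
  have hm3 : (3 <= m)%N.
    case: (ltnP 2 m) => // h; exfalso.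
    have em : m = 2%N by lia.
    subst m.
    have hc : forall j, (j < 2)%N -> step (v j) (v j.+1) by move=> j /hs [].
    have h01 := hc 0%N isT; have h12 := hc 1%N isT.
    rewrite hm in h12.
    have [hg|hg] : garc s (v 0%N) (v 1%N) \/ garc s (v 1%N) (v 0%N).
      case: (j0) hj0 ha0 => [|[|]] //= _; first by left.
      by rewrite hm; right.
    + case: h12 => [[e _]|[_ [_ [_ [_ hab]]]]]; first by case: hg => /(_ (esym e)).
      by case: hg => hne [_ [_ [_ hab']]]; apply: (above_asym nv gp hne hab').
    + case: h01 => [[e _]|[_ [_ [_ [_ hab]]]]]; first by case: hg => /(_ (esym e)).
      by case: hg => hne [_ [_ [_ hab']]]; apply: (above_asym nv gp hne hab').
  exists m, v, (fun j => `[< gedge s (v j) (v j.+1) >]); split => //; split => //; split.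
    by move=> j hj; have [hst hw] := hs j hj; split => //; exact: step_v1 hst.
  split => //; split.
    move=> j hj; case: asboolP => // hng.
    by have [[h|h] _] := hs j hj => //; exfalso; apply: hng.
  move=> j j' hjj' hj' _ _ [[e1 e2]|[e1 e2]].
    by have := hdist _ _ (ltn_trans hjj' hj') hj' e1; lia.
  case: (ltnP j'.+1 m) => h.
    by have := hdist _ _ (ltn_trans hjj' hj') h e1; lia.
  have ej' : j'.+1 = m by lia.
  rewrite ej' hm in e1.
  have ej := hdist _ _ (ltn_trans hjj' hj') (leq_trans (isT : (0 < 2)%N) hm2) e1.
  subst j.
  have := hdist _ _ (leq_trans (isT : (1 < 2)%N) hm2) hj' e2.
  by lia.
Qed.

End Walk.



Section TP.
Variables (R : realType) (I : finType) (s : I -> seg R).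

Definition tp (v : vtx R I) : R :=
  match pselect (exists t, 0 <= t <= 1 /\ v.2 = proj (P s v.1 t)) with
  | left H => proj1_sig (cid H)
  | right _ => 0
  end.

Lemma tpP v : is_vertex s v -> 0 <= tp v <= 1 /\ v.2 = proj (P s v.1 (tp v)).
Proof.
move=> [j [_ [hp _]]]; rewrite /tp; case: pselect => [H|hn].
- exact: (proj2_sig (cid H)).
- by exfalso; apply: hn; exact: psegP hp.
Qed.

Definition cutpt (v : vtx R I) := P s v.1 (tp v).
End TP.

Section Dir1.
Variables (R : realType) (I : finType) (s : I -> seg R).
Hypothesis nv : forall i, nonvertical (s i).
Hypothesis gp : general_position s.
Variable U : seq (vtx R I).
Hypothesis hU : forall v, List.In v U -> is_vertex s v.

Definition Qc := map (cutpt s) U.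
Definition Qp := fun p => List.In p Qc.
Definition Wv := fun v : vtx R I => ~ List.In v U.

Lemma notcut_W i t : ~ Qp (P s i t) -> Wv (i, proj (P s i t)).
Proof.
move=> hq hin; apply: hq; have [ht e] := tpP (hU hin).
have et := pinj nv e; rewrite /Qp /Qc.
have -> : P s i t = cutpt s (i, proj (P s i t)) by rewrite /cutpt /= -et.
exact: List.in_map.
Qed.

Definition Bt i a b (j : I) : Prop :=
  j <> i /\ exists t, sbetw a b t /\ on_pseg (s j) (proj (P s i t)).

Lemma cross_par i j t t' : j <> i -> 0 <= t <= 1 -> 0 <= t' <= 1 ->
  on_pseg (s j) (proj (P s i t)) -> on_pseg (s j) (proj (P s i t')) -> t = t'.
Proof.
move=> hji ht ht' h1 h2; apply: (pinj nv).
exact: (cross_uniq gp hji h1 (psegPt _ _ ht) h2 (psegPt _ _ ht')).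
Qed.

Lemma card_lt i a b a' b' j : (forall t, sbetw a' b' t -> sbetw a b t) ->
  Bt i a b j -> ~ Bt i a' b' j ->
  (#|[set j | `[< Bt i a' b' j >]]| < #|[set j | `[< Bt i a b j >]]|)%N.
Proof.
move=> hsub hj hnj; apply: proper_card; apply/properP; split.
  apply/subsetP => j'; rewrite !inE => /asboolP [hj' [t' [hs' hp']]].
  by apply/asboolP; split => //; exists t'; split => //; apply: hsub.
by exists j; rewrite inE; apply/asboolP.
Qed.

Lemma connect_par i tx N : forall a b, 0 <= tx <= 1 ->
  (#|[set j | `[< Bt i a b j >]]| < N)%N ->
  piece s Qp i (P s i tx) (P s i a) -> piece s Qp i (P s i tx) (P s i b) ->
  is_vertex s (i, proj (P s i a)) -> is_vertex s (i, proj (P s i b)) ->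
  exists bb, reach s Wv (i, proj (P s i a)) (i, proj (P s i b)) bb.
Proof.
elim: N => [//|N IH] a b htx hN ha hb hva hvb.
have [ha01 _] := (piece_par nv _ _ _ _).1 ha.
have [hb01 _] := (piece_par nv _ _ _ _).1 hb.
case: (pselect (exists j, Bt i a b j)) => [[j [hji [t [hst hpj]]]]|hno].
- have ht01 : 0 <= t <= 1.
    move: ha01 hb01 => /andP [? ?] /andP [? ?]; apply/andP; case: hst; lra.
  have hvt : is_vertex s (i, proj (P s i t)).
    by exists j; split => //=; split => //; exact: psegPt.
  have hmid : piece s Qp i (P s i tx) (P s i t).
    by apply: (piece_mid nv _ ha hb); [|rewrite /betw; case: hst; lra].
  have hBj : Bt i a b j by split => //; exists t.
  have [b1 r1] : exists bb, reach s Wv (i, proj (P s i a)) (i, proj (P s i t)) bb.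
    apply: IH => //; apply: (@leq_trans #|[set j | `[< Bt i a b j >]]|) => //.
    apply: (card_lt (j := j)) => //.
      by move=> t'; rewrite /sbetw in hst *; lra.
    move=> [_ [t' [hs' hp']]].
    have ht' : 0 <= t' <= 1.
      move: ha01 ht01 => /andP [? ?] /andP [? ?]; apply/andP; case: hs'; lra.
    have := cross_par hji ht01 ht' hpj hp'; rewrite /sbetw in hs'; lra.
  have [b2 r2] : exists bb, reach s Wv (i, proj (P s i t)) (i, proj (P s i b)) bb.
    apply: IH => //; apply: (@leq_trans #|[set j | `[< Bt i a b j >]]|) => //.
    apply: (card_lt (j := j)) => //.
      by move=> t'; rewrite /sbetw in hst *; lra.
    move=> [_ [t' [hs' hp']]].
    have ht' : 0 <= t' <= 1.
      move: hb01 ht01 => /andP [? ?] /andP [? ?]; apply/andP; case: hs'; lra.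
    have := cross_par hji ht01 ht' hpj hp'; rewrite /sbetw in hs'; lra.
  by exists (b1 || b2); exact: reach_trans r1 r2.
- have hWa := notcut_W (piece_notQ ha).
  have hWb := notcut_W (piece_notQ hb).
  case: (eqVneq a b) => [eab|hab].
    by subst b; exists false; constructor.
  exists (false || `[< garc s (i, proj (P s i a)) (i, proj (P s i b)) >]).
  apply: RS => //; last by constructor.
  left; apply: gedge_mk => // c hc [j [hji [_ hpj]]].
  by apply: hno; exists j; split => //; exists c.
Qed.


Lemma connect_piece A y z i : pieces s Qp A -> A y -> A z -> on_seg (s i) y ->
  is_vertex s (i, proj y) -> is_vertex s (i, proj z) ->
  exists bb, reach s Wv (i, proj y) (i, proj z) bb.
Proof.
move=> [i' [x [hx [_ eA]]]]; subst A => hy hz hiy hvy hvz.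
have ei := seg_uniq gp (piece_on hy) hiy; subst i'.
have [tx [htx ex]] := onP hx; have [a [ha ey]] := onP (piece_on hy).
have [b [hb ez]] := onP (piece_on hz); subst x y z.
exact: (connect_par (N := #|[set j | `[< Bt i a b j >]]|.+1) htx).
Qed.

Lemma W_of_piece A i p : pieces s Qp A -> A p -> on_seg (s i) p -> Wv (i, proj p).
Proof.
move=> [i' [x [hx [_ eA]]]]; subst A => hp hip.
have [t [ht ep]] := onP hip; subst p; exact: notcut_W (piece_notQ hp).
Qed.

Lemma arc_piece A B : pieces s Qp A -> pieces s Qp B -> above A B ->
  exists i p i' p', [/\ A p, on_seg (s i) p, B p', on_seg (s i') p' &
   [/\ is_vertex s (i, proj p), Wv (i, proj p), garc s (i, proj p) (i', proj p') &
       Wv (i', proj p')]].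
Proof.
move=> pA pB [p [p' [hp [hp' [e lt]]]]].
have pA' := pA; have pB' := pB.
move: pA pB => [i [x [hx [_ eA]]]] [i' [x' [hx' [_ eB]]]].
have hip : on_seg (s i) p by rewrite eA in hp; exact: piece_on hp.
have hip' : on_seg (s i') p' by rewrite eB in hp'; exact: piece_on hp'.
have hii : i <> i'.
  move=> ei; subst i'; have ep := seg_eq nv hip hip' e.
  by move: lt; rewrite ep ltxx.
have hv : is_vertex s (i, proj p).
  exists i'; split; first by move=> /= e'; apply: hii; rewrite e'.
  by split; [exact: seg_pseg hip|rewrite /= e; exact: seg_pseg hip'].
have hv' : is_vertex s (i', proj p').
  exists i; split; first by move=> /= e'; apply: hii; rewrite e'.
  by split; [exact: seg_pseg hip'|rewrite /= -e; exact: seg_pseg hip].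
exists i, p, i', p'; split => //; split => //.
- exact: W_of_piece pA' hp hip.
- split => //=; split => //; split => //; split => //.
  by exists p, p'.
- exact: W_of_piece pB' hp' hip'.
Qed.

Lemma no_depth : ~ has_cycle_in s Wv -> ~ has_depth_cycle (pieces s Qp).
Proof.
move=> hnc hdc; case: hdc => n [Pc [hn [hF [ha hPn]]]].
have [i0 [p0 [i1 [p1 [h0 hi0 h1 hi1 [hv0 hW0 harc0 hW1]]]]]] :=
  arc_piece (hF 0%N isT) (hF 1%N hn) (ha 0%N hn).
have claim : forall j, (1 <= j)%N -> (j <= n)%N -> exists i y,
    [/\ Pc j y, on_seg (s i) y, is_vertex s (i, proj y) &
        reach s Wv (i0, proj p0) (i, proj y) true].
  elim=> [//|j IH] hj1 hjn.
  case: (posnP j) => hj0.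
  - subst j; exists i1, p1; split => //.
      by case: harc0 => _ [_ [_ [h _]]].
    have := RS hW0 (or_intror harc0) (R0 s hW1).
    by rewrite orFb (_ : `[< _ >] = true) //; apply/asboolP.
  - have [i [y [hy hiy hvy hr]]] := IH hj0 (ltnW hjn).
    have [i2 [p [i3 [p' [hp hi2 hp' hi3 [hv2 hW2 harc hW3]]]]]] :=
      arc_piece (hF j (ltnW hjn)) (hF j.+1 hjn) (ha j hjn).
    have ei : i2 = i.
      move: (hF j (ltnW hjn)) => [i4 [x [_ [_ e]]]].
      rewrite e in hp hy; have e1 := seg_uniq gp (piece_on hp) hi2.
      have e2 := seg_uniq gp (piece_on hy) hiy; by rewrite -e1 e2.
    subst i2.
    have [bb rc] := connect_piece (hF j (ltnW hjn)) hy hp hiy hvy hv2.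
    exists i3, p'; split => //.
      by case: harc => _ [_ [_ [h _]]].
    have r2 := RS hW2 (or_intror harc) (R0 s hW3).
    have := reach_trans hr (reach_trans rc r2).
    by rewrite (_ : `[< _ >] = true) ?orbT //; apply/asboolP.
have [i [y [hy hiy hvy hr]]] := claim n hn (leqnn n).
have hy0 : Pc 0%N y by rewrite -hPn.
have ei : i0 = i.
  move: (hF 0%N isT) => [i4 [x [_ [_ e]]]].
  rewrite e in h0 hy0; have e1 := seg_uniq gp (piece_on h0) hi0.
  have e2 := seg_uniq gp (piece_on hy0) hiy; by rewrite -e1 e2.
subst i0.
have [bb rc] := connect_piece (hF 0%N isT) hy0 h0 hiy hvy hv0.
have := reach_trans hr rc; rewrite orTb => hcl.
have [m [v [ev0 [evm [_ [hs ha']]]]]] := reach_fun hcl.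
apply: hnc; apply: (cwalk_cycle nv gp (N := m.+1) (m := m) (v := v)) => //.
  by rewrite ev0 evm.
exact: ha'.
Qed.

End Dir1.

Lemma dir1 (R : realType) (I : finType) (s : I -> seg R) (k : nat) :
  (forall i : I, nonvertical (s i)) -> general_position s ->
  has_fvs_of_size s k -> eliminable_with s k.
Proof.
move=> nv gp [U [hk [hU hnc]]].
exists (Qc s U); split; first by rewrite size_map.
split.
  move=> q; rewrite /Qc => /List.in_map_iff [v [<- hv]].
  by exists v.1; have [ht _] := tpP (hU _ hv); exists (tp s v).
exact: (no_depth nv gp hU hnc).
Qed.




Section Dir2.
Variables (R : realType) (I : finType) (s : I -> seg R).
Hypothesis nv : forall i, nonvertical (s i).
Hypothesis gp : general_position s.

Definition good (U : seq (vtx R I)) (q : pt R) : Prop :=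
  forall i, on_seg (s i) q ->
  (is_vertex s (i, proj q) -> List.In (i, proj q) U) /\
  (forall a b t, gedge s (i, proj (P s i a)) (i, proj (P s i b)) -> sbetw a b t ->
     q = P s i t -> List.In (i, proj (P s i a)) U \/ List.In (i, proj (P s i b)) U).

Lemma good_mono U U' q : good U q -> (forall v, List.In v U -> List.In v U') -> good U' q.
Proof.
move=> hg hsub i hi; have [h1 h2] := hg i hi; split.
  by move=> hv; apply: hsub; apply: h1.
by move=> a b t hge hb e; case: (h2 a b t hge hb e) => h; [left|right]; apply: hsub.
Qed.

Lemma gedge_v2 v w : gedge s v w -> is_vertex s w.
Proof. by case=> _ [_ [h _]]. Qed.
Lemma gedge_v1 v w : gedge s v w -> is_vertex s v.
Proof. by case=> _ [h _]. Qed.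

Lemma local_U q : (exists i, on_seg (s i) q) -> exists Uq : seq (vtx R I),
  [/\ (size Uq <= 1)%N, (forall v, List.In v Uq -> is_vertex s v) & good Uq q].
Proof.
move=> [i hi]; have [tq [htq eq]] := onP hi; subst q.
have hseg : forall i', on_seg (s i') (P s i tq) -> i' = i.
  by move=> i' h; apply: (seg_uniq gp h hi).
have ht : forall t, P s i tq = P s i t -> t = tq.
  by move=> t e; apply: (pinj nv (i:=i)); rewrite e.
case: (pselect (is_vertex s (i, proj (P s i tq)))) => [hA|hnA].
  exists [:: (i, proj (P s i tq))]; split => //.
    by move=> v [<-|[]].
  move=> i' /hseg ->; split; first by left.
  move=> a b t hge hb /ht e; subst t; exfalso; exact: gedge_noin hge hA hb.
case: (pselect (exists a b, gedge s (i, proj (P s i a)) (i, proj (P s i b)) /\ sbetw a b tq))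
  => [[a [b [hge hb]]]|hnB].
  exists [:: (i, proj (P s i a))]; split => //.
    by move=> v [<-|[]]; exact: gedge_v1 hge.
  move=> i' /hseg ->; split; first by move=> /hnA.
  move=> a' b' t hge' hb' /ht e; subst t.
  have n1 : ~ sbetw a b a' by apply: gedge_noin hge (gedge_v1 hge').
  have n2 : ~ sbetw a b b' by apply: gedge_noin hge (gedge_v2 hge').
  have n3 : ~ sbetw a' b' a by apply: gedge_noin hge' (gedge_v1 hge).
  have n4 : ~ sbetw a' b' b by apply: gedge_noin hge' (gedge_v2 hge).
  have : a' = a \/ b' = a by rewrite /sbetw in n1 n2 n3 n4 hb hb' *; lra.
  by case=> ->; [left|right]; left.
exists [::]; split => //.
move=> i' /hseg ->; split; first by move=> /hnA.
move=> a b t hge hb /ht e; subst t; exfalso; apply: hnB; by exists a, b.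
Qed.

Lemma build_U (Q : seq (pt R)) : (forall q, List.In q Q -> exists i, on_seg (s i) q) ->
  exists U, [/\ (size U <= size Q)%N, (forall v, List.In v U -> is_vertex s v) &
    forall q, List.In q Q -> good U q].
Proof.
elim: Q => [_|q Q IH hQ]; first by exists [::].
have [U [hs hv hg]] := IH (fun q' h => hQ q' (or_intror h)).
have [Uq [hs' hv' hg']] := local_U (hQ q (or_introl erefl)).
exists (Uq ++ U); split.
- by rewrite size_cat /=; lia.
- by move=> v /List.in_app_iff [/hv'|/hv].
- move=> q' [<-|hq'].
    by apply: good_mono hg' _ => v hv0; apply/List.in_app_iff; left.
  by apply: good_mono (hg _ hq') _ => v hv0; apply/List.in_app_iff; right.
Qed.


Lemma max_idx (f : nat -> R) m : (0 < m)%N -> exists jm, (jm < m)%N /\ forall j, (j < m)%N -> f j <= f jm.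
Proof.
elim: m => [//|m IH] _.
case: (posnP m) => hm.
  by subst m; exists 0%N; split => // j; rewrite ltnS leqn0 => /eqP ->.
have [jm [hjm hmax]] := IH hm.
case: (lerP (f m) (f jm)) => h.
- exists jm; split; first lia.
  move=> j; rewrite ltnS leq_eqVlt => /orP [/eqP ->|/hmax] //.
- exists m; split => // j; rewrite ltnS leq_eqVlt => /orP [/eqP ->|/hmax h'] //.
  by apply: le_trans h' (ltW h).
Qed.

Lemma vtx_tp v : is_vertex s v -> v = (v.1, proj (P s v.1 (tp s v))).
Proof. by move=> /tpP [_ e]; rewrite -e; case: v {e}. Qed.

Lemma no_edge_cycle m (v : nat -> vtx R I) :
  (2 <= m)%N -> v m = v 0%N ->
  (forall j j', (j < m)%N -> (j' < m)%N -> v j = v j' -> j = j') ->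
  (forall j, (j < m)%N -> gedge s (v j) (v j.+1)) ->
  (forall j j', (j < j')%N -> (j' < m)%N -> ~ same_upair (v j) (v j.+1) (v j') (v j'.+1)) ->
  False.
Proof.
move=> hm2 hm hd hg hnr.
set i := (v 0%N).1.
have hi : forall j, (j <= m)%N -> (v j).1 = i.
  elim=> [//|j IH] hj; have := hg j hj; case=> e _; rewrite -e; apply: IH; lia.
have hvx : forall j, (j <= m)%N -> is_vertex s (v j).
  move=> j hj; case: (ltnP j m) => h; first exact: gedge_v1 (hg j h).
  have -> : j = m by lia.
  rewrite hm; exact: gedge_v1 (hg 0%N (leq_trans (isT : (0 < 2)%N) hm2)).
pose t j := tp s (v j).
have ev : forall j, (j <= m)%N -> v j = (i, proj (P s i (t j))).
  by move=> j hj; rewrite {1}(vtx_tp (hvx j hj)) /t hi.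
have [jm [hjm hmax]] := max_idx t (leq_trans (isT : (0 < 2)%N) hm2).
have hmax' : forall j, (j <= m)%N -> t j <= t jm.
  move=> j hj; case: (ltnP j m) => h; first exact: hmax.
  have -> : j = m by lia.
  by rewrite /t hm; apply: hmax; lia.
pose pr := if jm == 0%N then m.-1 else jm.-1.
have hpr : (pr < m)%N by rewrite /pr; case: eqP => _; lia.
have hprs : v pr.+1 = v jm.
  rewrite /pr; case: eqP => e.
    by rewrite e (_ : m.-1.+1 = m) //; lia.
  by rewrite (_ : jm.-1.+1 = jm) //; lia.
have g1 : gedge s (i, proj (P s i (t pr))) (i, proj (P s i (t jm))).
  by rewrite -(ev pr (ltnW hpr)) -(ev jm (ltnW hjm)) -hprs; apply: hg.
have g2 : gedge s (i, proj (P s i (t jm))) (i, proj (P s i (t jm.+1))).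
  by rewrite -(ev jm (ltnW hjm)) -(ev jm.+1 hjm); apply: hg.
have ne1 : t pr != t jm.
  by apply/eqP => e; case: g1 => _ [_ [_ [/= h _]]]; apply: h; rewrite e.
have ne2 : t jm.+1 != t jm.
  by apply/eqP => e; case: g2 => _ [_ [_ [/= h _]]]; apply: h; rewrite e.
have l1 : t pr < t jm by rewrite lt_neqAle ne1 hmax'; [|lia].
have l2 : t jm.+1 < t jm by rewrite lt_neqAle ne2 hmax'.
have et : t pr = t jm.+1.
  case: (ltgtP (t pr) (t jm.+1)) => // h; exfalso.
  - apply: (gedge_noin g1 _ (c := t jm.+1)); first by rewrite -(ev jm.+1 hjm); exact: hvx.
    by rewrite /sbetw; lra.
  - apply: (gedge_noin g2 _ (c := t pr)); first by rewrite -(ev pr (ltnW hpr)); apply: hvx; lia.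
    by rewrite /sbetw; lra.
have evv : v pr = v jm.+1 by rewrite (ev pr (ltnW hpr)) (ev jm.+1 hjm) et.
pose sc := if jm.+1 == m then 0%N else jm.+1.
have hsc : (sc < m)%N by rewrite /sc; case: eqP => e; lia.
have evs : v sc = v jm.+1 by rewrite /sc; case: eqP => // ->; rewrite hm.
have := hd _ _ hpr hsc (etrans evv (esym evs)).
rewrite /pr /sc => hh.
have em : m = 2%N by move: hh; case: eqP => e1; case: eqP => e2; lia.
subst m.
apply: (hnr 0%N 1%N isT isT); right; split => //.
Qed.


Lemma cycle_to_depth (Q : seq (pt R)) U : (forall q, List.In q Q -> good U q) ->
  has_cycle_in s (fun v => ~ List.In v U) -> has_depth_cycle (pieces s (fun p => List.In p Q)).
Proof.
move=> hgU [m [v [c [hm2 [hm [hW [hd [hs hnr]]]]]]]].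
set Qp := fun p => List.In p Q.
have hm0 : (0 < m)%N by lia.
have hv : forall j, (j <= m)%N -> is_vertex s (v j) /\ ~ List.In (v j) U.
  move=> j hj; case: (ltnP j m) => h; first exact: hW.
  have ej : j = m by lia.
  by rewrite ej hm; apply: hW.
pose pt j := P s (v j).1 (tp s (v j)).
have hpt : forall j, (j <= m)%N -> 0 <= tp s (v j) <= 1 /\ v j = ((v j).1, proj (pt j)).
  move=> j hj; have [h1 _] := hv j hj; split; first by case: (tpP h1).
  exact: vtx_tp h1.
have onpt : forall j, (j <= m)%N -> on_seg (s (v j).1) (pt j).
  by move=> j hj; apply: onPt; case: (hpt j hj).
have notQ : forall j, (j <= m)%N -> ~ Qp (pt j).
  move=> j hj hq; have [h1 _] := hgU _ hq _ (onpt j hj).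
  have [hvj hWj] := hv j hj; apply: hWj; have [_ e] := hpt j hj.
  by rewrite e; apply: h1; rewrite -e.
pose f j := piece s Qp (v j).1 (pt j).
have hstep : forall j, (j < m)%N ->
    (c j -> f j = f j.+1) /\ (~~ c j -> above (f j) (f j.+1)).
  move=> j hj; have := hs j hj; case: (c j) => hst; split => // _.
  - have e1 : (v j.+1).1 = (v j).1 by case: hst.
    rewrite /f /pt e1; set i := (v j).1.
    apply: (piece_eq nv (onpt j (ltnW hj))).
    have [ha01 ea] := hpt j (ltnW hj); have [hb01 eb] := hpt j.+1 hj.
    rewrite /pt e1 -/i in eb ea *.
    rewrite /pt -/i in ea.
    set a := tp s (v j) in ha01 ea *; set b := tp s (v j.+1) in hb01 eb *.
    apply/piece_par => //; split => // t ht.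
    case: (eqVneq t a) => [->|hta]; first by apply: (notQ j (ltnW hj)).
    case: (eqVneq t b) => [->|htb].
      by have := notQ j.+1 hj; rewrite /pt e1.
    have hst' : sbetw a b t.
      move: hta htb; rewrite /betw /sbetw in ht * => hta htb.
      case: ht => -[h1 h2]; [left|right]; split; rewrite lt_neqAle ?h1 ?h2 ?andbT //;
        by rewrite ?hta ?htb // eq_sym ?hta ?htb.
    move=> hq.
    have ht01 : 0 <= t <= 1.
      move: ha01 hb01 => /andP [? ?] /andP [? ?]; apply/andP; case: ht; lra.
    have [_ h2] := hgU _ hq i (onPt _ _ ht01).
    have hge : gedge s (i, proj (P s i a)) (i, proj (P s i b)).
      by rewrite -ea -eb.
    case: (h2 a b t hge hst' erefl) => hin.
    + by have [_ hWj] := hv j (ltnW hj); apply: hWj; rewrite ea.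
    + by have [_ hWj] := hv j.+1 hj; apply: hWj; rewrite eb.
  - have [hne [e2 [_ [_ [p [p' [hp [hp' [ep lt]]]]]]]]] := hst.
    have [_ ea] := hpt j (ltnW hj); have [_ eb] := hpt j.+1 hj.
    have epp : proj (pt j) = proj (pt j.+1).
      by move: e2; rewrite {1}ea {1}eb.
    have e3 : proj p = proj (pt j).
      apply: (cross_uniq gp hne (seg_pseg hp)); first by rewrite ep; exact: seg_pseg hp'.
        exact: seg_pseg (onpt j (ltnW hj)).
      by rewrite epp; exact: seg_pseg (onpt j.+1 hj).
    have e4 : p = pt j := seg_eq nv hp (onpt j (ltnW hj)) e3.
    have e5 : p' = pt j.+1.
      by apply: (seg_eq nv hp' (onpt j.+1 hj)); rewrite -ep e3.
    exists (pt j), (pt j.+1); split.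
      by apply: piece_self; [exact: (onpt j (ltnW hj))|exact: (notQ j (ltnW hj))].
    split; first by apply: piece_self; [exact: (onpt j.+1 hj)|exact: (notQ j.+1 hj)].
    by split => //; rewrite -e4 -e5.
apply: (chain (m := m) (f := f)).
- by rewrite /f /pt hm.
- move=> j hj; exists (v j).1, (pt j); split; first exact: onpt.
  by split; [exact: notQ|].
- move=> j hj; have [h1 h2] := hstep j hj.
  by case: (c j) h1 h2 => h1 h2; [left; apply: h1|right; apply: h2].
- case: (pselect (exists j, (j < m)%N /\ c j = false)) => [[j [hj hc]]|hno].
    by exists j; split => //; apply: (hstep j hj).2; rewrite hc.
  exfalso; apply: (no_edge_cycle hm2 hm hd).
    move=> j hj; have := hs j hj; case hcj: (c j) => // _.
    by exfalso; apply: hno; exists j.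
  move=> j j' hjj' hj' hsu; apply: (hnr j j' hjj' hj' _ _ hsu).
  + by case hcj: (c j) => //; exfalso; apply: hno; exists j; split => //; lia.
  + by case hcj: (c j') => //; exfalso; apply: hno; exists j'.
Qed.

End Dir2.

Lemma dir2 (R : realType) (I : finType) (s : I -> seg R) (k : nat) :
  (forall i : I, nonvertical (s i)) -> general_position s ->
  eliminable_with s k -> has_fvs_of_size s k.
Proof.
move=> nv gp [Q [hk [hQ hnd]]].
have [U [hsU hvU hgU]] := build_U nv gp hQ.
exists U; split; first exact: leq_trans hsU hk.
split => // hc; apply: hnd; exact: (cycle_to_depth nv gp hgU hc).
Qed.


Theorem lemma1 (R : realType) (I : finType) (s : I -> seg R) (k : nat) :
  (forall i : I, nonvertical (s i)) -> general_position s ->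
  (eliminable_with s k <-> has_fvs_of_size s k).
Proof.
move=> nv gp; split; [exact: dir2 | exact: dir1].
Qed.
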